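(* Let $A\in\mathbb{R}^{m\times n}$ be semi-monotone, let $A=P_1-R_1+S_1$ be a double proper weak regular splitting and $A=P_2-R_2+S_2$ a double proper regular splitting of $A$. Suppose $N(R_2)\supseteq N(P_2)$, $R(R_2)\subseteq R(P_2)$, $-1\notin\sigma(R_2P_1^{\dagger})$ and $\widehat{\mathcal{A}}^{\dagger}\geq 0$, where $\widehat{\mathcal{A}}=(I+R_2P_1^{\dagger})A$. If $P_2^{\dagger}R_2+P_2^{\dagger}S_2\leq 0$, then $\rho(\mathcal{W}_{12})\leq\rho(T_2)<1$, where $$\mathcal{W}_{12}=\begin{pmatrix} P_2^{\dagger}R_2P_1^{\dagger}R_1-P_2^{\dagger}S_2 & -P_2^{\dagger}R_2P_1^{\dagger}S_1\\ I & 0\end{pmatrix},\qquad T_2=\begin{pmatrix} P_2^{\dagger}R_2 & -P_2^{\dagger}S_2\\ I&0\end{pmatrix}.$$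
   Context: For $M\in\mathbb{R}^{m\times n}$, $M^{\dagger}$ is its Moore–Penrose inverse, $R(M)$, $N(M)$ its range and null space; inequalities are entrywise; $\rho$ is the spectral radius, $\sigma$ the spectrum. $A$ is semi-monotone if $A^{\dagger}\geq0$. A double splitting $A=P-R+S$ is a double proper splitting if $R(P)=R(A)$ and $N(P)=N(A)$; it is double proper regular if moreover $P^{\dagger}\geq0$, $R\geq0$, $S\leq0$; double proper weak regular if moreover $P^{\dagger}\geq 0$, $P^{\dagger}R\geq 0$, $P^{\dagger}S\leq 0$. *)

(* Defs.v *)
From HB Require Import structures.
From mathcomp Require Import all_boot all_order all_algebra.
From mathcomp Require Import classical_sets reals.
From mathcomp Require Import complex.
Set Implicit Arguments. Unset Strict Implicit. Unset Printing Implicit Defensive.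
Import Order.TTheory GRing.Theory Num.Theory.
Local Open Scope ring_scope.
Local Open Scope classical_set_scope.
Local Open Scope complex_scope.

Section Defs.
Variable R : realType.

Definition mx_ge0 m n (M : 'M[R]_(m, n)) : Prop := forall i j, 0 <= M i j.
Definition mx_le0 m n (M : 'M[R]_(m, n)) : Prop := forall i j, M i j <= 0.

Definition is_MP_inverse m n (M : 'M[R]_(m, n)) (X : 'M[R]_(n, m)) : Prop :=
  [/\ M *m X *m M = M, X *m M *m X = X,
      (M *m X)^T = M *m X & (X *m M)^T = X *m M].

Definition colspace m n (M : 'M[R]_(m, n)) : set 'cV[R]_m :=
  [set y | exists x : 'cV[R]_n, y = M *m x].
Definition nullspace m n (M : 'M[R]_(m, n)) : set 'cV[R]_n :=
  [set x | M *m x = 0].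

Definition semi_monotone m n (M : 'M[R]_(m, n)) (Md : 'M[R]_(n, m)) : Prop :=
  is_MP_inverse M Md /\ mx_ge0 Md.

Definition double_proper_splitting m n (A P Q S : 'M[R]_(m, n)) : Prop :=
  [/\ A = P - Q + S, colspace P = colspace A & nullspace P = nullspace A].

Definition double_proper_regular m n (A P Q S : 'M[R]_(m, n))
    (Pd : 'M[R]_(n, m)) : Prop :=
  [/\ double_proper_splitting A P Q S, is_MP_inverse P Pd,
      mx_ge0 Pd, mx_ge0 Q & mx_le0 S].

Definition double_proper_weak_regular m n (A P Q S : 'M[R]_(m, n))
    (Pd : 'M[R]_(n, m)) : Prop :=
  [/\ double_proper_splitting A P Q S, is_MP_inverse P Pd,
      mx_ge0 Pd, mx_ge0 (Pd *m Q) & mx_le0 (Pd *m S)].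

Definition spectrum n (M : 'M[R]_n) : set R[i] :=
  [set z | eigenvalue (map_mx (fun x : R => x%:C) M) z].
Definition spectral_radius n (M : 'M[R]_n) : R :=
  sup [set ComplexField.Normc.normc z | z in spectrum M].

End Defs.

(* Main.v *)
Require Import Defs.
From HB Require Import structures.
From mathcomp Require Import all_boot all_order all_algebra.
From mathcomp Require Import classical_sets reals.
From mathcomp Require Import complex.
From mathcomp Require Import boolp.
From mathcomp Require Import ring lra.
From mathcomp Require Import perm.
Import Order.TTheory GRing.Theory Num.Theory.
Local Open Scope ring_scope.
Local Open Scope classical_set_scope.

Set Implicit Arguments. Unset Strict Implicit.
Local Open Scope complex_scope.

Lemma normC_def (R : rcfType) (z : R[i]) : `|z| = (ComplexField.Normc.normc z)%:C.
Proof. by case: z. Qed.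

Lemma normC_real (R : rcfType) (x : R) : `|x%:C| = `|x|%:C.
Proof. by rewrite normC_def /= expr0n /= addr0 sqrtr_sqr. Qed.


Lemma normC_ge0 (R : rcfType) (x : R) : 0 <= x -> `|x%:C| = x%:C.
Proof. by move=> x0; rewrite ger0_norm // lecR. Qed.

Lemma normc_ge0 (R : rcfType) (z : R[i]) : 0 <= ComplexField.Normc.normc z.
Proof. by case: z => a b /=; rewrite sqrtr_ge0. Qed.

Lemma minprin (R : realType) N (L : 'M[R]_N) (b k : R) :
  mx_ge0 L -> (forall i, \sum_j L i j <= b) -> b < k ->
  forall x : 'cV_N, mx_ge0 ((k%:M - L) *m x) -> mx_ge0 x.
Proof.
move=> L0 Lb bk x Hx i j; rewrite (ord1 j) {j}.
case: (@arg_minP _ _ _ i xpredT (fun i => x i 0) isT) => i0 _ Hmin.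
suff: 0 <= x i0 0 by move/le_trans; apply; exact: Hmin.
rewrite leNgt; apply/negP => neg.
have := Hx i0 0; rewrite mulmxBl mul_scalar_mx !mxE.
set S := \sum_j _.
have h1 : (\sum_j L i0 j) * x i0 0 <= S.
  rewrite big_distrl /=; apply: ler_sum => j _; apply: ler_wpM2l => //; exact: Hmin.
have h2 : b * x i0 0 <= (\sum_j L i0 j) * x i0 0 by apply: ler_wnM2r; [exact: ltW|exact: Lb].
have h3 : k * x i0 0 < b * x i0 0 by rewrite ltr_nM2r.
lra.
Qed.

Lemma det_bound (R : realType) N (A : 'M[R]_N) b :
  (forall i j, `|A i j| <= b) -> `|\det A| <= #|{perm 'I_N}|%:R * b ^+ N.
Proof.
move=> Hb; rewrite /determinant.
apply: le_trans (ler_norm_sum _ _ _) _.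
apply: (@le_trans _ _ (\sum_(s : 'S_N) b ^+ N)); last first.
  by rewrite sumr_const mulr_natl cardE.
apply: ler_sum => s _.
rewrite normrM normrX normrN1 expr1n mul1r normr_prod.
rewrite -[N in b ^+ N]card_ord -prodr_const; apply: ler_prod => i _.
by rewrite normr_ge0 Hb.
Qed.

Lemma horner_char (F : fieldType) n (A : 'M[F]_n) a :
  (char_poly A).[a] = \det (a%:M - A).
Proof.
rewrite /char_poly /determinant horner_sum; apply: eq_bigr => s _.
rewrite hornerM horner_exp !hornerE; congr (_ * _).
rewrite (big_morph _ (fun p q => hornerM p q a) (hornerC 1 a)).
by apply: eq_bigr => i _; rewrite !mxE !(hornerE, hornerMn).
Qed.

Lemma adj_bound (R : realType) k (A : 'M[R]_k.+1) b :
  (forall i j, `|A i j| <= b) ->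
  forall i j, `|\adj A i j| <= #|{perm 'I_k}|%:R * b ^+ k.
Proof.
move=> Hb i j; rewrite mxE /cofactor normrM normrX normrN1 expr1n mul1r.
by apply: det_bound => i' j'; rewrite !mxE; apply: Hb.
Qed.

Lemma det_lower (R : realType) N (M : 'M[R]_N) (a : R) :
  (forall z, spectrum M z -> ComplexField.Normc.normc z < a) ->
  exists2 c, 0 < c & forall t, a <= t -> c <= `|\det (t%:M - M)|.
Proof.
move=> H.
set M' := map_mx (fun x : R => x%:C) M.
have [rs Hrs] := closed_field_poly_normal (char_poly M').
rewrite (monicP (char_poly_monic M')) scale1r in Hrs.
have Hz z : z \in rs -> ComplexField.Normc.normc z < a.
  move=> zin; apply: H; rewrite /spectrum /=.
  by rewrite eigenvalue_root_char Hrs root_prod_XsubC.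
exists (\prod_(z <- rs) (a - ComplexField.Normc.normc z)).
  by rewrite big_seq; apply: prodr_gt0 => z zin; rewrite subr_gt0; exact: Hz.
move=> t at_.
have e : ((\det (t%:M - M))%:C) = \prod_(z <- rs) (t%:C - z).
  rewrite -det_map_mx map_mxB /= map_scalar_mx -/M' -horner_char Hrs horner_prod.
  by apply: eq_bigr => z _; rewrite hornerXsubC.
rewrite -lecR -normC_real e normr_prod rmorph_prod /= !big_seq.
apply: ler_prod => z zin; have hz := Hz z zin.
have n0 := normc_ge0 z.
rewrite lecR subr_ge0 (ltW hz) /=.
apply: le_trans (lerB_dist _ _).
rewrite normC_ge0; last by apply: le_trans at_; apply: le_trans (ltW hz).
by rewrite normC_def -rmorphB lecR lerB.
Qed.

Lemma map_block (R : realType) n (B C : 'M[R]_n) :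
  map_mx (fun x : R => x%:C) (block_mx B C 1%:M 0 : 'M_(n+n)) =
  block_mx (map_mx (fun x : R => x%:C) B) (map_mx (fun x : R => x%:C) C) 1%:M 0.
Proof. by rewrite map_block_mx map_mx1 map_mx0. Qed.


Lemma companion_bound (R : realType) (n : nat) (B C : 'M[R]_n) (a : R) (u : 'cV[R]_n) :
  mx_ge0 B -> mx_ge0 C -> 0 < a -> mx_ge0 u ->
  (forall i, (a *: (B *m u) + C *m u) i 0 <= a ^+ 2 * u i 0) ->
  (forall i, u i 0 = 0 -> forall j, B i j = 0 /\ C i j = 0) ->
  forall z, spectrum (block_mx B C 1%:M 0 : 'M_(n+n)) z ->
  ComplexField.Normc.normc z <= a.
Proof.
move=> B0 C0 a0 u0 Hu Hsupp z /eigenvalueP [v vT vnz].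
rewrite map_block in vT.
set B' := map_mx _ B in vT; set C' := map_mx _ C in vT.
move: vT vnz; rewrite -[v]hsubmxK; set p := lsubmx v; set q := rsubmx v.
rewrite mul_row_block mulmx1 mulmx0 addr0 scale_row_mx => /eq_row_mx [e1 e2] vnz.
have [->|z0] := eqVneq z 0; first by rewrite ComplexField.Normc.normc0 ltW.
have hq : q = z^-1 *: (p *m C') by rewrite e2 scalerA mulVf // scale1r.
have e3 j : z ^+ 2 * p 0 j = \sum_i p 0 i * (z * B' i j + C' i j).
  move/matrixP: (e1) => /(_ 0 j); rewrite !mxE => e1'.
  move/matrixP: (e2) => /(_ 0 j); rewrite !mxE => e2'.
  rewrite expr2 -mulrA -e1' mulrDr -e2' big_distrr -big_split /=; apply: eq_bigr => i _.
  by rewrite mulrDr mulrCA.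
have Bij i j : B' i j = (B i j)%:C by rewrite mxE.
have Cij i j : C' i j = (C i j)%:C by rewrite mxE.
rewrite leNgt; apply/negP => hz; move: hz; rewrite -ltcR -normC_def => hz.
have hz0 : 0 < `|z| by rewrite normr_gt0.
have a0' : 0 < a%:C by rewrite ltcR.
set s := \sum_i `|p 0 i| * (u i 0)%:C.
have s0 : 0 <= s by apply: sumr_ge0 => i _; rewrite mulr_ge0 // lecR.
have key : `|z| ^+ 2 * s <= `|z| * a%:C * s.
  rewrite /s big_distrr /=.
  apply: (@le_trans _ _ (\sum_j \sum_i `|p 0 i| * (`|z| * (B i j)%:C + (C i j)%:C) * (u j 0)%:C)).
    apply: ler_sum => j _; rewrite mulrA -normrX -normrM e3.
    rewrite -big_distrl /=; apply: ler_wpM2r; first by rewrite lecR.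
    apply: le_trans (ler_norm_sum _ _ _) _; apply: ler_sum => i _.
    rewrite normrM; apply: ler_wpM2l => //; apply: le_trans (ler_normD _ _) _.
    by rewrite normrM Bij Cij !normC_ge0.
  apply: (@le_trans _ _ (\sum_j \sum_i `|p 0 i| * ((`|z| / a%:C) * (a%:C * (B i j)%:C + (C i j)%:C)) * (u j 0)%:C)).
    apply: ler_sum => j _; apply: ler_sum => i _.
    apply: ler_wpM2r; first by rewrite lecR.
    apply: ler_wpM2l => //.
    rewrite mulrDr mulrA mulfVK ?gt_eqF //; apply: lerD => //.
    rewrite ler_peMl ?lecR // ler_pdivlMr // mul1r; exact: ltW.
  rewrite exchange_big /= big_distrr /=; apply: ler_sum => i _.
  have -> : \sum_j `|p 0 i| * (`|z| / a%:C * (a%:C * (B i j)%:C + (C i j)%:C)) * (u j 0)%:C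
      = `|p 0 i| * (`|z| / a%:C * ((a *: (B *m u) + C *m u) i 0)%:C).
    rewrite !mxE rmorphD rmorphM !rmorph_sum /= !big_distrr /= -big_split /=.
    rewrite !big_distrr /=; apply: eq_bigr => j _; rewrite !rmorphM /=; ring.
  apply: (@le_trans _ _ (`|p 0 i| * (`|z| / a%:C * (a ^+ 2 * u i 0)%:C))).
    apply: ler_wpM2l => //; apply: ler_wpM2l; first by rewrite divr_ge0 // ltW.
    by rewrite lecR.
  rewrite le_eqVlt; apply/orP; left; apply/eqP.
  rewrite rmorphM rmorphXn /=; field; exact: lt0r_neq0.
have s00 : s = 0.
  apply/eqP; apply/negPn/negP => sn0.
  have sp : 0 < s by rewrite lt_def sn0 s0.
  move: key; rewrite ler_pM2r // expr2 ler_pM2l // => H.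
  by have := lt_le_trans hz H; rewrite ltxx.
move: s00 => /eqP; rewrite psumr_eq0 => [/allP Hs|i _]; last by rewrite mulr_ge0 // lecR.
have zp j : z ^+ 2 * p 0 j = 0.
  rewrite e3 big1 // => i _.
  have := Hs i (mem_index_enum _); rewrite mulf_eq0 normr_eq0 => /orP [/eqP->|]; first by rewrite mul0r.
  move=> /eqP [] /Hsupp /(_ j) [bij cij]; by rewrite Bij Cij bij cij mulr0 addr0 mulr0.
have p0 : p = 0.
  apply/matrixP => i j; rewrite (ord1 i) [RHS]mxE.
  by move: (zp j) => /eqP; rewrite mulf_eq0 expf_eq0 (negbTE z0) andbF /= => /eqP.
by move: vnz; rewrite hq p0 mul0mx scaler0 row_mx0 eqxx.
Qed.

Lemma spec_bound (R : realType) N (M : 'M[R]_N) z :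
  spectrum M z -> ComplexField.Normc.normc z <= \sum_i \sum_j `|M i j|.
Proof.
move=> /eigenvalueP [v vM vnz].
set K := \sum_i \sum_j `|M i j|.
have [k vk] : exists k, v 0 k != 0.
  case: (pickP (fun k => v 0 k != 0)) => [k vk|H]; first by exists k.
  move: vnz; have -> : v = 0; last by rewrite eqxx.
  apply/matrixP => i j; rewrite (ord1 i) mxE; apply/eqP.
  by have := H j; rewrite /= => /negbFE.
set S := \sum_j `|v 0 j|.
have Sp : 0 < S.
  rewrite /S (bigD1 k) //= ltr_pwDl ?normr_gt0 //.
  by apply: sumr_ge0 => j _.
have Mij i j : `|M i j| <= K.
  rewrite /K (bigD1 i) //= (bigD1 j) //= -addrA lerDl.
  rewrite addr_ge0 //; first by apply: sumr_ge0.
  by apply: sumr_ge0 => i' _; apply: sumr_ge0.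
have key : `|z| * S <= K%:C * S.
  rewrite /S big_distrr /=.
  apply: (@le_trans _ _ (\sum_j \sum_i `|v 0 i| * (`|M i j|)%:C)).
    apply: ler_sum => j _; rewrite -normrM.
    move/matrixP: vM => /(_ 0 j); rewrite !mxE => <-.
    apply: le_trans (ler_norm_sum _ _ _) _; apply: ler_sum => i _.
    by rewrite normrM mxE normC_real; apply: ler_wpM2l => //; rewrite lecR.
  rewrite exchange_big /= [X in _ <= X]mulrC big_distrl /=; apply: ler_sum => i _.
  rewrite -big_distrr /=; apply: ler_wpM2l => //.
  rewrite -rmorph_sum lecR /K [X in _ <= X](bigD1 i) //= lerDl.
  by apply: sumr_ge0 => i' _; apply: sumr_ge0.
rewrite -lecR -normC_def.
by move: key; rewrite ler_pM2r.
Qed.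


Lemma rho_has_ub (R : realType) N (M : 'M[R]_N) :
  has_ubound [set ComplexField.Normc.normc z | z in spectrum M].
Proof. by exists (\sum_i \sum_j `|M i j|) => x [z Sz <-]; exact: spec_bound. Qed.

Lemma rho_ub (R : realType) N (M : 'M[R]_N) z :
  spectrum M z -> ComplexField.Normc.normc z <= spectral_radius M.
Proof. by move=> Sz; have := ub_le_sup (@rho_has_ub R N M); apply; exists z. Qed.

Lemma rho_le (R : realType) N (M : 'M[R]_N) b : 0 <= b ->
  (forall z, spectrum M z -> ComplexField.Normc.normc z <= b) -> spectral_radius M <= b.
Proof.
move=> b0 H.
have [[x [z Sz _]]|nE] := pselect (exists x, [set ComplexField.Normc.normc z | z in spectrum M] x).
  apply: ge_sup; first by exists (ComplexField.Normc.normc z), z.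
  by move=> y [w Sw <-]; exact: H.
rewrite /spectral_radius.
suff -> : [set ComplexField.Normc.normc z | z in spectrum M] = set0 by rewrite sup0.
by apply/seteqP; split=> y // Hy; exfalso; apply: nE; exists y.
Qed.

Lemma rho_ge0 (R : realType) N (M : 'M[R]_N) : 0 <= spectral_radius M.
Proof.
have [[x [z Sz _]]|nE] := pselect (exists x, [set ComplexField.Normc.normc z | z in spectrum M] x).
  exact: le_trans (normc_ge0 z) (rho_ub Sz).
rewrite /spectral_radius.
suff -> : [set ComplexField.Normc.normc z | z in spectrum M] = set0 by rewrite sup0.
by apply/seteqP; split=> y // Hy; exfalso; apply: nE; exists y.
Qed.

Lemma mulmx_ge0 (R : realType) m n p (A : 'M[R]_(m, n)) (B : 'M[R]_(n, p)) :
  mx_ge0 A -> mx_ge0 B -> mx_ge0 (A *m B).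
Proof. by move=> A0 B0 i j; rewrite mxE; apply: sumr_ge0 => k _; apply: mulr_ge0. Qed.

Definition Mon (R : realType) N (X : 'M[R]_N) :=
  forall x : 'cV_N, mx_ge0 (X *m x) -> mx_ge0 x.

Lemma HL (R : realType) N (M : 'M[R]_N) (a : R) :
  mx_ge0 M -> (forall z, spectrum M z -> ComplexField.Normc.normc z < a) ->
  (a%:M - M) \in unitmx /\ Mon (a%:M - M).
Proof.
move=> M0 H.
have [c c0 Hc] := det_lower H.
have unit_t t : a <= t -> (t%:M - M) \in unitmx.
  move=> at_; rewrite unitmxE unitfE -normr_gt0; exact: lt_le_trans c0 (Hc t at_).
split; first exact: unit_t.
case: N M M0 H unit_t Hc => [|k] M M0 H unit_t Hc.
  by move=> x _ i; case: i.
set sM := \sum_i \sum_j M i j.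
have rowM i : \sum_j M i j <= sM.
  rewrite /sM [X in _ <= X](bigD1 i) //= lerDl.
  by apply: sumr_ge0 => i' _; apply: sumr_ge0 => j _.
have sM0 : 0 <= sM by apply: sumr_ge0 => i _; apply: sumr_ge0 => j _.
set t0 := sM + `|a| + 1.
have at0 : a <= t0.
  rewrite /t0; have := ler_norm a; have := normr_ge0 a; lra.
have Mon_big s : t0 <= s -> Mon (s%:M - M).
  move=> hs; apply: (minprin (b := sM)) => // ; rewrite /t0 in hs.
  have := normr_ge0 a; lra.
set bb := t0 + sM.
set Kd := #|{perm 'I_k}|%:R * bb ^+ k.
set Kinv := Kd / c.
have bb0 : 0 <= bb by rewrite /bb /t0; have := normr_ge0 a; lra.
have Kinv0 : 0 <= Kinv by apply: divr_ge0; [apply: mulr_ge0; [exact: ler0n | exact: exprn_ge0] | exact: ltW].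
have Rbound t : a <= t -> t <= t0 -> forall i j, `|invmx (t%:M - M) i j| <= Kinv.
  move=> at_ tt0 i j; rewrite /invmx unit_t // mxE normrM normfV.
  rewrite /Kinv mulrC; apply: ler_pM.
  - exact: normr_ge0.
  - by rewrite invr_ge0 normr_ge0.
  - apply: adj_bound => i' j'; rewrite !mxE.
    apply: le_trans (ler_normB _ _) _; rewrite /bb lerD //.
    + have h1 := ler_norm a; have h2 := ler_norm (- a); rewrite normrN in h2.
      have h3 := normr_ge0 a.
      have t0p : 0 <= t0 by rewrite /t0; lra.
      case: (i' == j'); rewrite ?mulr1n ?mulr0n ?normr0 //.
      rewrite real_ler_norml ?num_real //; rewrite /t0 in tt0 *; apply/andP; split; lra.
    + by rewrite ger0_norm // (le_trans _ (rowM i')) // (bigD1 j') //= lerDl sumr_ge0.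
  - by rewrite lef_pV2 ?posrE ?normr_gt0 //; [exact: Hc|rewrite -normr_gt0; exact: lt_le_trans c0 (Hc t at_)].
set d := (2 * ((k.+1)%:R * Kinv + 1))^-1.
have d0 : 0 < d by rewrite /d invr_gt0 mulr_gt0 // ltr_pwDr // mulr_ge0.
have dK : d * ((k.+1)%:R * Kinv) <= 1 / 2.
  have y0 : 0 <= (k.+1)%:R * Kinv by rewrite mulr_ge0.
  rewrite /d; move: y0; move: ((k.+1)%:R * Kinv) => y y0.
  have y1 : 0 < y + 1 by rewrite ltr_pwDr.
  have -> : (2 * (y + 1))^-1 * y = 1 / 2 * (y / (y + 1)).
    by field; rewrite (lt0r_neq0 y1).
  rewrite -[Z in _ <= Z]mulr1; apply: ler_wpM2l; first lra.
  rewrite ler_pdivrMr // ?mul1r ?mulr1; lra.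
have step t s : a <= s -> s <= t -> t <= t0 -> t - d <= s -> Mon (t%:M - M) -> Mon (s%:M - M).
  move=> as_ st tt0 tds Mt x Hx.
  have at_ : a <= t by apply: le_trans st.
  set Rt := invmx (t%:M - M).
  have Rt0 : mx_ge0 Rt.
    move=> i j.
    have := Mt (col j Rt); rewrite colE mulmxA mulmxV ?unit_t // mul1mx => /(_ _ i 0).
    rewrite -colE mxE; apply.
    by move=> i' j'; rewrite !mxE; case: (_ == _); case: (_ == _).
  have E : Rt *m (s%:M - M) = 1%:M - (t - s) *: Rt.
    have -> : s%:M - M = (t%:M - M) - (t - s)%:M :> 'M_k.+1.
      by apply/matrixP => i j; rewrite !mxE; case: (i == j); rewrite ?mulr1n ?mulr0n; ring.
    by rewrite mulmxBr mulVmx ?unit_t // mul_mx_scalar.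
  apply: (@minprin _ _ ((t - s) *: Rt) (1 / 2) 1).
  - by move=> i j; rewrite mxE mulr_ge0 // subr_ge0.
  - move=> i; rewrite (eq_bigr (fun j => (t - s) * Rt i j)); last by move=> j _; rewrite mxE.
    rewrite -big_distrr /=; apply: le_trans dK.
    apply: ler_pM; first by rewrite subr_ge0.
    + by apply: sumr_ge0 => j _.
    + by rewrite lerBlDr addrC -lerBlDr.
    + apply: le_trans (_ : \sum_(j < k.+1) Kinv <= _).
        apply: ler_sum => j _; apply: le_trans (ler_norm _) _; exact: Rbound.
      by rewrite sumr_const card_ord mulr_natl.
  - lra.
  - by rewrite -E -mulmxA; apply: mulmx_ge0.
have ind j : forall s, a <= s -> t0 - j%:R * d <= s -> Mon (s%:M - M).
  elim: j => [|j IH] s as_ hs.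
    by apply: Mon_big; rewrite mul0r subr0 in hs.
  have [h|h] := lerP (t0 - j%:R * d) s; first exact: IH.
  have jd0 : 0 <= j%:R * d by rewrite mulr_ge0 // ltW.
  apply: (step (t0 - j%:R * d)) => //.
  - exact: ltW.
  - by rewrite lerBlDr lerDl.
  - have : (j.+1)%:R * d = j%:R * d + d by rewrite -addn1 natrD mulrDl mul1r.
    lra.
  - by apply: IH => //; apply: le_trans (ltW h).
have [j hj] : exists j : nat, t0 - j%:R * d <= a.
  have h0 : 0 <= (t0 - a) / d by rewrite divr_ge0 ?subr_ge0 // ltW.
  exists (Num.bound ((t0 - a) / d)).
  have := archi_boundP h0; rewrite ltr_pdivrMr // => h.
  rewrite lerBlDr -lerBlDl; exact: ltW.
exact: (ind j a (le_refl a) hj).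
Qed.

Lemma mx_eq_cV (R : realType) m n (X Y : 'M[R]_(m, n)) :
  (forall x : 'cV_n, X *m x = Y *m x) -> X = Y.
Proof.
move=> H; apply/matrixP => i j.
by have := congr1 (fun M : 'cV_m => M i 0) (H (delta_mx j 0)); rewrite -!colE !mxE.
Qed.

Lemma L_colsub (R : realType) m n p (P : 'M[R]_(m, n)) (Pd : 'M[R]_(n, m)) (M : 'M[R]_(m, p)) :
  is_MP_inverse P Pd -> colspace M `<=` colspace P -> P *m Pd *m M = M.
Proof.
move=> [h1 _ _ _] H; apply: mx_eq_cV => x.
have [y e] : colspace P (M *m x) by apply: H; exists x.
by rewrite -mulmxA e mulmxA h1.
Qed.

Lemma L_nullsub (R : realType) m n p (P : 'M[R]_(m, n)) (Pd : 'M[R]_(n, m)) (M : 'M[R]_(p, n)) :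
  is_MP_inverse P Pd -> nullspace P `<=` nullspace M -> M *m Pd *m P = M.
Proof.
move=> [h1 _ _ _] H; apply: mx_eq_cV => x.
have : nullspace M (x - Pd *m P *m x).
  apply: H; rewrite /nullspace /= mulmxBr !mulmxA h1 subrr //.
rewrite /nullspace /= mulmxBr !mulmxA => /eqP; rewrite subr_eq0 => /eqP <-//.
Qed.

Lemma L5 (R : realType) m n (M P : 'M[R]_(m, n)) (Md Pd : 'M[R]_(n, m)) :
  is_MP_inverse M Md -> is_MP_inverse P Pd -> M *m Pd *m P = M -> Pd *m P *m Md = Md.
Proof.
move=> [m1 m2 m3 m4] [p1 p2 p3 p4] H.
have HT : Pd *m P *m M^T = M^T by rewrite -p4 -trmx_mul mulmxA H.
have eMd : Md = M^T *m Md^T *m Md by rewrite -trmx_mul m4 m2.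
by rewrite eMd !mulmxA HT.
Qed.

Lemma L6 (R : realType) m n (M P : 'M[R]_(m, n)) (Md Pd : 'M[R]_(n, m)) :
  is_MP_inverse M Md -> is_MP_inverse P Pd -> M *m Md *m P = P -> Pd *m M *m Md = Pd.
Proof.
move=> [m1 m2 m3 m4] [p1 p2 p3 p4] H.
have HT : P^T *m (M *m Md) = P^T by rewrite -m3 -trmx_mul H.
have ePd : Pd = Pd *m Pd^T *m P^T by rewrite -mulmxA -trmx_mul p3 mulmxA p2.
by rewrite {1}ePd -!mulmxA HT !mulmxA -ePd.
Qed.

Lemma row_zero (R : realType) m n (M P : 'M[R]_(m, n)) (Md Pd : 'M[R]_(n, m)) i :
  is_MP_inverse M Md -> is_MP_inverse P Pd -> nullspace M `<=` nullspace P ->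
  (forall j, Md i j = 0) -> forall j, Pd i j = 0.
Proof.
move=> hM hP hN hi j.
have e1 : P *m Md *m M = P by apply: L_nullsub.
have e2 : Md *m M *m Pd = Pd by apply: L5 hP hM e1.
rewrite -e2 -mulmxA mxE big1 // => k _; by rewrite hi mul0r.
Qed.

Lemma col_zero (R : realType) m n (M P : 'M[R]_(m, n)) (Md Pd : 'M[R]_(n, m)) k :
  is_MP_inverse M Md -> is_MP_inverse P Pd -> colspace P `<=` colspace M ->
  (forall j, Md j k = 0) -> forall j, Pd j k = 0.
Proof.
move=> hM hP hC hk j.
have e1 : M *m Md *m P = P by apply: L_colsub.
have e2 : Pd *m M *m Md = Pd by apply: L6 hM hP e1.
rewrite -e2 mxE big1 // => l _; by rewrite hk mulr0.
Qed.

Lemma opp_ge0 (R : realType) m n (Y : 'M[R]_(m, n)) : mx_le0 Y -> mx_ge0 (- Y).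
Proof. by move=> H i j; rewrite mxE oppr_ge0. Qed.

Lemma block_ge0 (R : realType) n (B C : 'M[R]_n) :
  mx_ge0 B -> mx_ge0 C -> mx_ge0 (block_mx B C 1%:M 0 : 'M_(n + n)).
Proof.
move=> B0 C0 i j.
rewrite -(splitK i) -(splitK j).
case: (split i) => i'; case: (split j) => j' /=;
  rewrite ?block_mxEul ?block_mxEur ?block_mxEdl ?block_mxEdr ?mxE //.
Qed.

Lemma const_ge0 (R : realType) m n : mx_ge0 (const_mx 1 : 'M[R]_(m, n)).
Proof. by move=> i j; rewrite mxE. Qed.

Lemma sum_zero (R : realType) n (F : 'I_n -> R) :
  (forall k, 0 <= F k) -> \sum_k F k = 0 -> forall k, F k = 0.
Proof.
move=> F0 /eqP; rewrite psumr_eq0 // => /allP H k.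
by have := H k (mem_index_enum _); move/implyP/(_ isT)/eqP.
Qed.

Lemma mx_mul_row0 (R : realType) m n p (X : 'M[R]_(m, n)) (Y : 'M[R]_(n, p)) i :
  (forall l, X i l = 0) -> forall j, (X *m Y) i j = 0.
Proof. by move=> H j; rewrite mxE big1 // => l _; rewrite H mul0r. Qed.

Unset Implicit Arguments. Set Strict Implicit.
Local Close Scope complex_scope.

Theorem theorem3p15 (R : realType) (m n : nat)
    (A P1 R1 S1 P2 R2 S2 : 'M[R]_(m, n))
    (Ad P1d P2d Ahatd : 'M[R]_(n, m)) :
  semi_monotone A Ad ->
  double_proper_weak_regular A P1 R1 S1 P1d ->
  double_proper_regular A P2 R2 S2 P2d ->
  nullspace P2 `<=` nullspace R2 ->
  colspace R2 `<=` colspace P2 ->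
  ~ spectrum (R2 *m P1d) (-1) ->
  semi_monotone ((1%:M + R2 *m P1d) *m A) Ahatd ->
  mx_le0 (P2d *m R2 + P2d *m S2) ->
  spectral_radius
    (block_mx (P2d *m R2 *m P1d *m R1 - P2d *m S2) (- (P2d *m R2 *m P1d *m S1))
              1%:M 0 : 'M[R]_(n + n))
  <= spectral_radius
    (block_mx (P2d *m R2) (- (P2d *m S2)) 1%:M 0 : 'M[R]_(n + n))
  /\ spectral_radius
    (block_mx (P2d *m R2) (- (P2d *m S2)) 1%:M 0 : 'M[R]_(n + n)) < 1.
Proof.
move=> [hA Ad0] [[eA1 c1 n1] hP1 P1d0 D0 E0'] [[eA2 c2 n2] hP2 P2d0 R20 S20] hN hR _ _ hc.
have eW1 : P2d *m R2 *m P1d *m R1 - P2d *m S2 = (P2d *m R2) *m (P1d *m R1) + - (P2d *m S2).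
  by rewrite !mulmxA.
have eW2 : - (P2d *m R2 *m P1d *m S1) = (P2d *m R2) *m (- (P1d *m S1)).
  by rewrite mulmxN !mulmxA.
rewrite eW1 eW2.
set B := P2d *m R2; set C := - (P2d *m S2); set D := P1d *m R1; set E := - (P1d *m S1).
have B0 : mx_ge0 B by apply: mulmx_ge0.
have C0 : mx_ge0 C by rewrite /C -mulmxN; apply: mulmx_ge0 => //; exact: opp_ge0.
have E0 : mx_ge0 E by exact: opp_ge0.
have CB0 : mx_ge0 (C - B).
  move=> i j; have := hc i j; rewrite /C /B !mxE; lra.
have hnA2 : nullspace A `<=` nullspace P2 by rewrite n2.
have hnP2A : nullspace P2 `<=` nullspace A by rewrite n2.
have hcP2A : colspace P2 `<=` colspace A by rewrite c2.
have hcAP2 : colspace A `<=` colspace P2 by rewrite c2.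
have rT1 : spectral_radius (block_mx B C 1%:M 0 : 'M_(n+n)) < 1.
  set z := Ad *m (const_mx 1 : 'cV[R]_m).
  set q := P2d *m (const_mx 1 : 'cV[R]_m).
  have z0 : mx_ge0 z by apply: mulmx_ge0 => //; exact: const_ge0.
  have q0 : mx_ge0 q by apply: mulmx_ge0 => //; exact: const_ge0.
  have E5 : P2d *m P2 *m Ad = Ad.
    by apply: (L5 hA hP2); apply: (L_nullsub hP2 hnP2A).
  have E6 : P2d *m A *m Ad = P2d.
    by apply: (L6 hA hP2); apply: (L_colsub hA hcP2A).
  have eRS : R2 - S2 = P2 - A by apply/matrixP=> i j; rewrite eA2 !mxE; ring.
  have eBC : (B + C) *m z = z - q.
    by rewrite /B /C -mulmxN -mulmxDr eRS mulmxBr mulmxBl /z /q !mulmxA E5 E6.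
  have supp i : z i 0 = 0 -> forall j, B i j = 0 /\ C i j = 0.
    move=> zi.
    have : \sum_k Ad i k = 0 by rewrite -[RHS]zi /z mxE; apply: eq_bigr => k _; rewrite mxE mulr1.
    move/(sum_zero (fun k => Ad0 i k)) => hAd.
    have hP := row_zero hA hP2 hnA2 hAd.
    move=> j; split; first exact: mx_mul_row0.
    by rewrite /C mxE (mx_mul_row0 _ hP) oppr0.
  have pos i : 0 < z i 0 -> 0 < q i 0.
    move=> zi; rewrite lt_def (q0 i 0) andbT; apply/negP => /eqP qi.
    have : \sum_k P2d i k = 0 by rewrite -[RHS]qi /q mxE; apply: eq_bigr => k _; rewrite mxE mulr1.
    move/(sum_zero (fun k => P2d0 i k)) => hP.
    have hAd := row_zero hP2 hA hnP2A hP.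
    by move: zi; rewrite /z (mx_mul_row0 _ hAd) ltxx.
  have [eps [e0 [e1 he]]] : exists eps : R, 0 < eps /\ eps <= 1 /\ forall i, eps * z i 0 <= q i 0.
    case: (pickP (fun i => 0 < z i 0)) => [i0 hi0|hnone]; last first.
      exists 1; split => //; split => // i; have := hnone i; rewrite /= => /negbT; rewrite -leNgt => h.
      have -> : z i 0 = 0 by apply/eqP; rewrite eq_le h (z0 i 0).
      by rewrite mulr0 (q0 i 0).
    case: (@arg_minP _ _ _ i0 (fun i => 0 < z i 0) (fun i => q i 0 / z i 0) hi0) => j hj hmin.
    exists (Order.min 1 (q j 0 / z j 0)); split; [|split].
    - by rewrite lt_min ltr01 divr_gt0 // pos.
    - by rewrite ge_min lexx.
    - move=> i; have [zi|zi] := boolP (0 < z i 0).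
        apply: (@le_trans _ _ (q i 0 / z i 0 * z i 0)); last by rewrite divfK // lt0r_neq0.
        apply: ler_wpM2r; first exact: ltW.
        by rewrite ge_min (hmin i zi) orbT.
      have -> : z i 0 = 0 by apply/eqP; rewrite eq_le (z0 i 0) andbT leNgt zi.
      by rewrite mulr0 (q0 i 0).
  set g := 1 - eps / 2.
  have g0 : 0 < g by rewrite /g; lra.
  have g1 : g < 1 by rewrite /g; lra.
  have ineq i : (g *: (B *m z) + C *m z) i 0 <= g ^+ 2 * z i 0.
    have bz0 : mx_ge0 (B *m z) by apply: mulmx_ge0.
    have hei := he i; have zi0 := z0 i 0.
    have h2 : (1 - eps) * z i 0 <= g ^+ 2 * z i 0.
      by apply: ler_wpM2r => //; rewrite /g; nra.
    rewrite mulrBl mul1r in h2.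
    move: eBC bz0 h2 hei zi0; rewrite mulmxDl; clearbody z q.
    move: (B *m z) (C *m z) => bz cz eBC bz0 h2 hei zi0.
    have e := congr1 (fun M : 'cV_n => M i 0) eBC; rewrite /= !mxE in e.
    have h1 : g * bz i 0 <= bz i 0 by rewrite ler_piMl // ltW.
    rewrite !mxE; lra.
  have Hb := companion_bound B0 C0 g0 z0 ineq supp.
  by apply: le_lt_trans g1; apply: rho_le; [exact: ltW | exact: Hb].
have BD0 : mx_ge0 (B *m D + C).
  by move=> i j; rewrite mxE; apply: addr_ge0; [exact: mulmx_ge0|exact: C0].
have BE0 : mx_ge0 (B *m E) by apply: mulmx_ge0.
have key a : spectral_radius (block_mx B C 1%:M 0 : 'M_(n+n)) < a -> a <= 1 ->
   forall mu, spectrum (block_mx (B *m D + C) (B *m E) 1%:M 0 : 'M_(n+n)) mu ->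
   ComplexField.Normc.normc mu <= a.
  move=> ha ha1.
  have a0 : 0 < a by apply: le_lt_trans (rho_ge0 _) ha.
  have [unitT MonT] := HL (block_ge0 B0 C0) (fun z hz => le_lt_trans (rho_ub hz) ha).
  set w := Ad^T *m (const_mx 1 : 'cV[R]_n).
  have w0 : mx_ge0 w.
    by apply: mulmx_ge0; [move=> i j; rewrite mxE; exact: Ad0 | exact: const_ge0].
  have hw : w = Ad^T *m (const_mx 1 : 'cV[R]_n) by [].
  clearbody w.
  set q' := P2d *m w.
  have q0 : mx_ge0 q' by apply: mulmx_ge0.
  have hq' : q' = P2d *m w by [].
  clearbody q'.
  set y := invmx (a%:M - block_mx B C 1%:M 0) *m col_mx q' (0 : 'cV_n).
  have ey : (a%:M - block_mx B C 1%:M 0) *m y = col_mx q' 0 by rewrite mulKVmx.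
  have y0 : mx_ge0 y.
    apply: MonT; rewrite ey => i j; rewrite -(splitK i).
    by case: (split i) => i' /=; rewrite ?col_mxEu ?col_mxEd ?mxE //; exact: q0.
  clearbody y.
  move: ey y0; rewrite -[y]vsubmxK; move: (usubmx y) (dsubmx y) => u1 u ey y0.
  rewrite mulmxBl mul_scalar_mx mul_block_col mul1mx mul0mx addr0 scale_col_mx opp_col_mx add_col_mx in ey.
  case/eq_col_mx: ey => ey1 ey2.
  move/eqP: ey2; rewrite subr_eq0 => /eqP ey2.
  have eqG : a ^+ 2 *: u - a *: (B *m u) - C *m u = q'.
    by rewrite -ey1 -ey2 scalerA -expr2 scalemxAr opprD addrA.
  have u0 : mx_ge0 u by move=> i j; have := y0 (rshift _ i) j; rewrite col_mxEd.
  have supp i : u i 0 = 0 -> forall j, (B *m D + C) i j = 0 /\ (B *m E) i j = 0.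
    move=> ui.
    have bu := mulmx_ge0 B0 u0; have cu := mulmx_ge0 C0 u0.
    have qi : q' i 0 = 0.
      apply/eqP; rewrite eq_le (q0 i 0) andbT.
      have := congr1 (fun M : 'cV_n => M i 0) eqG.
      move: (bu i 0) (cu i 0); move: (B *m u) (C *m u) => X Y hX hY /=.
      rewrite !mxE ui => <-; nra.
    have hk : forall k, P2d i k * w k 0 = 0.
      apply: sum_zero; first by move=> k; apply: mulr_ge0.
      by rewrite -[RHS]qi hq' mxE.
    have hP : forall k, P2d i k = 0.
      move=> k; have := hk k; move/eqP; rewrite mulf_eq0 => /orP [/eqP //|/eqP wk].
      have : \sum_j Ad j k = 0.
        by rewrite -[RHS]wk hw mxE; apply: eq_bigr => j _; rewrite !mxE mulr1.
      move/(sum_zero (fun j => Ad0 j k)) => hAd.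
      exact: (col_zero hA hP2 hcP2A hAd).
    have Bi : forall l, B i l = 0 by exact: mx_mul_row0.
    have Ci : forall l, C i l = 0 by move=> l; rewrite /C mxE (mx_mul_row0 _ hP) oppr0.
    move=> j; split; last exact: mx_mul_row0.
    by rewrite mxE (mx_mul_row0 _ Bi) Ci addr0.
  have eR2 : P2 *m P2d *m R2 = R2 := L_colsub hP2 hR.
  have eA : P2 *m P2d *m A = A := L_colsub hP2 hcAP2.
  have eP : P2 *m P2d *m P2 = P2 by case: hP2.
  have hS : S2 = A - P2 + R2 by rewrite eA2; apply/matrixP => i j; rewrite !mxE; ring.
  have eS2 : P2 *m P2d *m S2 = S2.
    by rewrite {1}hS !mulmxDr mulmxN eA eP eR2 -hS.
  have ew : P2 *m P2d *m w = w.
    have -> : w = A *m (Ad *m Ad^T *m (const_mx 1 : 'cV[R]_n)).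
      rewrite hw !mulmxA; congr (_ *m _).
      by case: hA => _ m2 m3 _; rewrite -{1}m2 -mulmxA trmx_mul m3.
    by rewrite !mulmxA eA.
  have eMu : a ^+ 2 *: (P2 *m u) - a *: (R2 *m u) + S2 *m u = w.
    have := congr1 (mulmx P2) eqG; rewrite hq' mulmxA ew => <-.
    rewrite !mulmxBr !scalemxAr /B /C !mulmxA eR2 mulmxN mulNmx mulmxA eS2 opprK.
    by [].
  have Au0 : mx_ge0 (A *m u).
    have idA : a ^+ 2 *: (A *m u) = (a ^+ 2 *: (P2 *m u) - a *: (R2 *m u) + S2 *m u)
        + (1 - a) *: (a *: (R2 *m u) - (1 + a) *: (S2 *m u)).
      rewrite eA2 !mulmxDl mulNmx.
      move: (P2 *m u) (R2 *m u) (S2 *m u) => X Y Z.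
      by apply/matrixP => i j; rewrite !mxE; ring.
    rewrite eMu in idA.
    move=> i j.
    have r0 := mulmx_ge0 R20 u0 i j.
    have s0 : mx_ge0 (- S2 *m u) by apply: mulmx_ge0 => //; exact: opp_ge0.
    have s0' := s0 i j; rewrite mulNmx mxE oppr_ge0 in s0'.
    have w0' := w0 i j.
    have := congr1 (fun M : 'cV_m => M i j) idA.
    move: r0 s0' w0'; move: (A *m u) (R2 *m u) (S2 *m u) => X Y Z r0 s0' w0' /=.
    rewrite !mxE => e.
    have t0 : 0 <= a * Y i j - (1 + a) * Z i j by nra.
    have : 0 <= a ^+ 2 * X i j by rewrite e; apply: addr_ge0 => //; apply: mulr_ge0 => //; lra.
    by rewrite pmulr_rge0 // exprn_gt0.
  have E4 : R2 *m P1d *m P1 = R2 by apply: (L_nullsub hP1); rewrite n1 -n2.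
  have E4' : P2d *m R2 *m P1d *m P1 = P2d *m R2 by rewrite -!mulmxA (mulmxA R2) E4.
  have e1 : B *m P1d *m A = B - B *m D - B *m E.
    rewrite {1}eA1 !mulmxDr /B /D /E E4'.
    by rewrite !mulmxN !mulmxA opprK.
  have eBDE : B *m u - B *m (D *m u) - B *m (E *m u) = B *m (P1d *m (A *m u)).
    by rewrite !mulmxA e1 !mulmxBl !mulmxA.
  have ineq i : (a *: ((B *m D + C) *m u) + (B *m E) *m u) i 0 <= a ^+ 2 * u i 0.
    have idW : a ^+ 2 *: u - (a *: ((B *m D + C) *m u) + (B *m E) *m u)
       = (a ^+ 2 *: u - a *: (B *m u) - C *m u) + (1 - a) *: ((C - B) *m u + B *m (D *m u))
         + (B *m u - B *m (D *m u) - B *m (E *m u)).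
      rewrite mulmxDl mulmxBl -!mulmxA.
      move: (B *m (D *m u)) (C *m u) (B *m u) (B *m (E *m u)) => X Y Z V.
      by apply/matrixP => i' j'; rewrite !mxE; ring.
    rewrite eqG eBDE in idW.
    have n1' := mulmx_ge0 CB0 u0 i 0.
    have n2' := mulmx_ge0 B0 (mulmx_ge0 D0 u0) i 0.
    have n3' := mulmx_ge0 B0 (mulmx_ge0 P1d0 Au0) i 0.
    have q0' := q0 i 0.
    have := congr1 (fun M : 'cV_n => M i 0) idW.
    move: n1' n2' n3' q0'.
    move: ((C - B) *m u) (B *m (D *m u)) (B *m (P1d *m (A *m u))) ((B *m D + C) *m u) ((B *m E) *m u) => X Y Z V U.
    move=> n1' n2' n3' q0' /=; rewrite !mxE => e.
    have : 0 <= (1 - a) * (X i 0 + Y i 0) by apply: mulr_ge0; lra.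
    lra.
  exact: (companion_bound BD0 BE0 a0 u0 ineq supp).
split; last exact: rT1.
apply: rho_le (rho_ge0 _) _ => mu hmu.
rewrite leNgt; apply/negP => hlt.
have [h|h] := lerP (ComplexField.Normc.normc mu) 1.
  set r := spectral_radius _ in hlt rT1 key.
  have := key ((r + ComplexField.Normc.normc mu) / 2) ltac:(lra) ltac:(lra) mu hmu.
  lra.
have := key 1 rT1 (lexx 1) mu hmu; lra.
Qed.
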